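(* Let $\mathcal{D}$ be a finite set, $n\ge3$ and $k\ge0$ integers. The share of $n$-ary relations on $\mathcal{D}$ that are projoin reducible with $k$ parameters, among all $2^{|\mathcal{D}|^n}$ $n$-ary relations on $\mathcal{D}$, is $<1$ when $|\mathcal{D}|>\binom{n+k}{n-1}$, and tends to $0$ as $|\mathcal{D}|\to\infty$ (with $n,k$ fixed).
   Context: An $n$-ary relation on $\mathcal{D}$ is $R\subseteq\mathcal{D}^\Sigma$ with $\Sigma=\{1,\dots,n\}$. For attributed relations $R_i\subseteq\mathcal{D}^{\Lambda_i}$, the join is $\{a\in\mathcal{D}^{\cup_i\Lambda_i}: a|_{\Lambda_i}\in R_i\ \forall i\}$ and $\pi_\Gamma$ denotes restriction of all tuples to $\Gamma$. $R$ is projoin reducible with $k$ parameters if there is a set $\textup{T}$ of $k$ attributes disjoint from $\Sigma$, a cover $\textup{T}\cup\Sigma=\Lambda_1\cup\dots\cup\Lambda_m$ with $0<|\Lambda_i|<n$, and $R^{\Lambda_i}\subseteq\mathcal{D}^{\Lambda_i}$ such that $R=\pi_\Sigma[R^{\Lambda_1}\Join\dots\Join R^{\Lambda_m}]$. *)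

(* Defs.v *)
From HB Require Import structures.
From mathcomp Require Import all_boot all_order all_algebra.
From mathcomp Require Import boolp.

Set Implicit Arguments.
Unset Strict Implicit.
Unset Printing Implicit Defensive.

(* Attributes: the n-ary relation lives on Sigma = 'I_n (= {1,...,n}).
   For projoin reductions with k parameters we use the attribute set
   'I_(n+k): the first n attributes (lshift k i) form Sigma, the last k
   attributes form the parameter set T (disjoint from Sigma). *)

Definition restr (D : finType) (N : nat) (L : {set 'I_N})
  (a : {ffun 'I_N -> D}) : {ffun {x : 'I_N | x \in L} -> D} :=
  [ffun x => a (val x)].

Definition proj_Sigma (D : finType) (n k : nat)
  (a : {ffun 'I_(n + k) -> D}) : {ffun 'I_n -> D} :=
  [ffun i => a (lshift k i)].

Definition join (D : finType) (N m : nat) (L : 'I_m -> {set 'I_N})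
  (RL : forall i : 'I_m, {set {ffun {x : 'I_N | x \in L i} -> D}}) :
  {set {ffun 'I_N -> D}} :=
  [set a : {ffun 'I_N -> D} | [forall i, restr (L i) a \in RL i]].

Definition projoin_reducible (D : finType) (n k : nat)
  (R : {set {ffun 'I_n -> D}}) : Prop :=
  exists (m : nat) (L : 'I_m -> {set 'I_(n + k)})
         (RL : forall i : 'I_m, {set {ffun {x : 'I_(n + k) | x \in L i} -> D}}),
    [/\ \bigcup_(i < m) L i = [set: 'I_(n + k)],
        (forall i, 0 < #|L i| < n)%N
      & R = [set @proj_Sigma D n k a | a in join RL]].

Definition reducible_rels (D : finType) (n k : nat) : {set {set {ffun 'I_n -> D}}} :=
  [set R | `[< @projoin_reducible D n k R >]].

Definition reducible_share (D : finType) (n k : nat) : rat :=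
  ((#|reducible_rels D n k|)%:R / (2 ^ (#|D| ^ n))%:R)%R.

(* Main.v *)
Require Import Defs.
From HB Require Import structures.
From mathcomp Require Import all_boot all_order all_algebra.
From mathcomp Require Import boolp.

Set Implicit Arguments.
Unset Strict Implicit.
Unset Printing Implicit Defensive.

Lemma card_setT (T : finType) : #|{set T}| = 2 ^ #|T|.
Proof. by rewrite -[LHS]cardsT -powersetT card_powerset cardsT. Qed.

Lemma exists_superset (T : finType) (A : {set T}) j :
  (#|A| + j <= #|T|)%N -> exists S : {set T}, A \subset S /\ #|S| = #|A| + j.
Proof.
elim: j => [|j IH] Hu; first by exists A; rewrite addn0.
have Hj : (#|A| + j <= #|T|)%N by rewrite (leq_trans _ Hu) // leq_add2l.
have [S [HAS HS]] := IH Hj.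
have : ~~ ([set: T] \subset S).
  by apply/negP => HST; move: Hu; rewrite -cardsT -(eqP (_ : S == setT)) ?HS ?addnS ?ltnn // eqEsubset subsetT.
case/subsetPn => z _ Hz.
exists (z |: S); split; first by rewrite (subset_trans HAS) // subsetUr.
by rewrite cardsU1 Hz HS add1n addnS.
Qed.

Section Count.
Variables (D : finType) (n k : nat).
Hypothesis (Hn : (0 < n)%N).

Let N := (n + k)%N.
Definition idx := {S : {set 'I_(n + k)} | #|S| == n.-1}.

Lemma card_idx : #|{: idx}| = 'C(n + k, n.-1).
Proof. rewrite card_sig; have := card_draws 'I_(n + k) n.-1; rewrite card_ord => <-; by apply: eq_card => S; rewrite !inE. Qed.

Variable x0 : 'I_(n + k).

Definition eS (S : idx) (t : 'I_n.-1) : 'I_(n + k) := nth x0 (enum (val S)) t.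

Lemma eS_onto (S : idx) z : z \in val S -> exists t, eS S t = z.
Proof.
move=> Hz.
have Hi : (index z (enum (val S)) < n.-1)%N.
  have HS := eqP (valP S).
  by rewrite -[X in (_ < X)%N]HS cardE index_mem mem_enum.
by exists (Ordinal Hi); rewrite /eS /= nth_index // mem_enum.
Qed.

Definition Phi (x : {ffun idx -> {set {ffun 'I_n.-1 -> D}}}) : {set {ffun 'I_n -> D}} :=
  [set @proj_Sigma D n k a | a in
     [set a : {ffun 'I_(n + k) -> D} | [forall S, [ffun t => a (eS S t)] \in x S]]].

Lemma red_sub : reducible_rels D n k \subset Phi @: setT.
Proof.
apply/subsetP => R; rewrite inE => /asboolP [m [L [RL [Hcov Hsz ->]]]].
pose J := join RL.
pose x : {ffun idx -> {set {ffun 'I_n.-1 -> D}}} := [ffun S : idx => [set [ffun t => a (eS S t)] | a : {ffun 'I_(n + k) -> D} in J]].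
apply/imsetP; exists x; first by rewrite inE.
suff EJ : [set a : {ffun 'I_(n + k) -> D} | [forall S, [ffun t => a (eS S t)] \in x S]] = J.
  by rewrite /Phi EJ.
apply/setP => a; rewrite inE.
apply/forallP/idP.
- move=> H; rewrite /J /join inE; apply/forallP => i.
  have Hle : (#|L i| + (n.-1 - #|L i|) <= #|'I_(n + k)|)%N.
    have := Hsz i; case/andP => _ Hl.
    rewrite subnKC ?card_ord; last by rewrite -ltnS prednK.
    by rewrite (leq_trans (leq_pred n)) // leq_addr.
  have [S0 [HLS HS0]] := exists_superset Hle.
  have HS0' : #|S0| == n.-1.
    have := Hsz i; case/andP => _ Hl.
    by rewrite HS0 subnKC // -ltnS prednK.
  pose S : idx := Sub S0 HS0'.
  have := H S; rewrite ffunE => /imsetP [b Hb Heq].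
  move: Hb; rewrite inE => /forallP /(_ i).
  suff -> : restr (L i) a = restr (L i) b by [].
  apply/ffunP => y; rewrite !ffunE.
  have Hy : val y \in val S by apply: (subsetP HLS); exact: valP y.
  have [t Ht] := eS_onto Hy.
  by rewrite -Ht; move/ffunP: Heq => /(_ t); rewrite !ffunE.
- move=> Ha S; rewrite ffunE; exact: imset_f.
Qed.

Lemma card_red :
  (#|reducible_rels D n k| <= 2 ^ (#|D| ^ n.-1 * 'C(n + k, n.-1)))%N.
Proof.
apply: (leq_trans (subset_leq_card red_sub)).
apply: (leq_trans (leq_imset_card _ _)).
by rewrite cardsT card_ffun card_setT card_ffun card_ord card_idx expnM.
Qed.

End Count.

From mathcomp Require Import zify.
Import Order.TTheory GRing.Theory Num.Theory.

Theorem theorem24 (n k : nat) : (3 <= n)%N ->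
  (forall D : finType, ('C(n + k, n - 1) < #|D|)%N ->
     (reducible_share D n k < 1)%R) /\
  (forall eps : rat, (0 < eps)%R ->
     exists N0 : nat, forall D : finType, (N0 <= #|D|)%N ->
       (reducible_share D n k < eps)%R).
Proof.
move=> Hn.
have Hn0 : (0 < n)%N by apply: leq_trans Hn.
have Hnk : (0 < n + k)%N by apply: leq_trans (leq_addr _ _).
pose x0 : 'I_(n + k) := Ordinal Hnk.
set C := 'C(n + k, n - 1).
have Hred : forall D : finType,
    (#|reducible_rels D n k| <= 2 ^ (#|D| ^ (n - 1) * C))%N.
  by move=> D; rewrite /C subn1; exact: card_red x0.
have HT : forall d, (d ^ n = d ^ (n - 1) * d)%N.
  by move=> d; rewrite -expnSr subn1 prednK.
have H2 : forall T : nat, (0 < (2 ^ T)%:R :> rat)%R.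
  by move=> T; rewrite ltr0n expn_gt0.
split.
- move=> D HD; rewrite /reducible_share ltr_pdivrMr // mul1r ltr_nat.
  apply: leq_ltn_trans (Hred D) _; rewrite ltn_exp2l // HT ltn_pmul2l //.
  by rewrite expn_gt0 (leq_ltn_trans _ HD).
- move=> eps Heps.
  have [Nb HNb] : exists Nb : nat, (eps^-1 < Nb%:R)%R.
    by exists (Num.bound eps^-1); apply: archi_boundP; rewrite invr_ge0 ltW.
  exists (C + Nb).+1 => D HD.
  set d := #|D| in HD *.
  have Hp : (0 < d ^ (n - 1))%N by rewrite expn_gt0 (leq_trans _ HD).
  have HTn : (d ^ (n - 1) * C + Nb <= d ^ n)%N.
    rewrite HT; move: Hp HD; set p := (d ^ (n - 1))%N; nia.
  have Hepsb : (1 < eps * (2 ^ Nb)%:R)%R.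
    rewrite -ltr_pdivrMl // mulr1.
    apply: (lt_le_trans HNb); rewrite ler_nat; exact: ltnW (ltn_expl _ _).
  rewrite /reducible_share ltr_pdivrMr //.
  apply: (le_lt_trans (_ : _ <= (2 ^ (d ^ (n - 1) * C))%:R)%R).
    by rewrite ler_nat; exact: Hred.
  apply: (lt_le_trans (_ : _ < eps * (2 ^ Nb)%:R * (2 ^ (d ^ (n - 1) * C))%:R)%R).
    by rewrite -[X in (X < _)%R]mul1r ltr_pM2r.
  rewrite -mulrA ler_pM2l // -natrM ler_nat -expnD addnC leq_exp2l //.
Qed.
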